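(* Let $G$ be a finite simple graph with at least one edge, and let $R(G)$ be its regularization. Then $$\frac{|V(R(G))|}{\mathrm{es}_{\Delta}(R(G))}\leq \frac{|V(G)|}{\mathrm{es}_{\Delta}(G)}.$$
   Context: $\mathrm{es}_{\Delta}(H)$ is the minimum number of edges of $H$ whose removal results in a subgraph with maximum degree $\Delta(H)-1$. $\mathrm{core}(H)$ is the set of vertices of maximum degree in $H$. The regularization $R(G)$ is defined as follows. If $G$ is regular, $R(G)=G$. Otherwise, let $A_G=V(G)\setminus\mathrm{core}(G)$, and let $G^{(1)}$ be obtained from two disjoint copies $G'$ and $G''$ of $G$ by adding an edge between each vertex of $A_{G'}$ and its corresponding copy in $A_{G''}$ (so $\Delta(G^{(1)})=\Delta(G)$ and $\delta(G^{(1)})=\delta(G)+1$). Iterating this construction, $G^{(i+1)}=(G^{(i)})^{(1)}$, and $R(G)=G^{(\Delta(G)-\delta(G))}$, which is $\Delta(G)$-regular. *)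

(* Defs.v *)
From mathcomp Require Import all_boot all_order all_algebra.
Set Implicit Arguments. Unset Strict Implicit. Unset Printing Implicit Defensive.

(* A graph on a finite vertex type T is given by an adjacency relation e.
   A finite simple graph: e symmetric and irreflexive. *)

Definition deg (T : finType) (e : rel T) (x : T) : nat := #|[set y | e x y]|.

Definition maxdeg (T : finType) (e : rel T) : nat := \max_(x : T) deg e x.

(* minimum degree delta(G) (maxdeg used as neutral element; all degrees are
   <= maxdeg, so this is the minimum when T is nonempty) *)
Definition mindeg (T : finType) (e : rel T) : nat :=
  \big[minn/maxdeg e]_(x : T) deg e x.

Definition core (T : finType) (e : rel T) : {set T} :=
  [set x | deg e x == maxdeg e].

Definition edges (T : finType) (e : rel T) : {set {set T}} :=
  [set [set x; y] | x in T, y in T & e x y].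

Definition remove_edges (T : finType) (e : rel T) (F : {set {set T}}) : rel T :=
  fun x y => e x y && ([set x; y] \notin F).

Definition es_ok (T : finType) (e : rel T) (F : {set {set T}}) : bool :=
  (F \subset edges e) && (maxdeg (remove_edges e F) == (maxdeg e).-1).

Definition esDelta (T : finType) (e : rel T) : nat :=
  \big[minn/#|edges e|]_(F : {set {set T}} | es_ok e F) #|F|.

(* graphs packaged with their vertex type, to allow iteration *)
Definition graphT := {T : finType & rel T}.
Definition gV (G : graphT) : finType := projT1 G.
Definition gE (G : graphT) : rel (gV G) := projT2 G.

(* G^(1): two disjoint copies G' = V x {false}, G'' = V x {true}, plus an edge
   between each vertex of A_G = V \ core(G) and its copy. *)
Definition double_rel (T : finType) (e : rel T) : rel (T * bool)%type :=
  fun u v =>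
    ((u.2 == v.2) && e u.1 v.1) ||
    [&& u.1 == v.1, u.2 != v.2 & u.1 \notin core e].

Definition double (G : graphT) : graphT :=
  existT (fun T : finType => rel T) (gV G * bool)%type (double_rel (@gE G)).

Definition regularization (T : finType) (e : rel T) : graphT :=
  iter (maxdeg e - mindeg e) double (existT (fun T : finType => rel T) T e).

(* Main.v *)
Require Import Defs.
From mathcomp Require Import all_boot all_order all_algebra.
From mathcomp Require Import zify.
Import GRing.Theory Num.Theory.
Local Open Scope ring_scope.

Local Open Scope nat_scope.

Lemma bigmin_le (I : finType) (P : pred I) (G : I -> nat) d j :
  P j -> \big[minn/d]_(i | P i) G i <= G j.
Proof.
move=> Pj; have: j \in index_enum I by rewrite mem_index_enum.
elim: (index_enum I) => [|a r IH] //=.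
rewrite big_cons inE => /predU1P [<-|jr].
  by rewrite Pj geq_minl.
case: (P a); last exact: IH.
by rewrite geq_min (IH jr) orbT.
Qed.

Lemma leq_bigmin (I : finType) (P : pred I) (G : I -> nat) d m :
  (forall i, P i -> m <= G i) -> m <= d -> m <= \big[minn/d]_(i | P i) G i.
Proof.
move=> hG hd; apply: (big_ind (fun x => m <= x)) => //.
by move=> x y hx hy; rewrite leq_min hx hy.
Qed.

Lemma deg_le_max {T : finType} (e : rel T) x : deg e x <= maxdeg e.
Proof. exact: (@leq_bigmax T (fun x => deg e x) x). Qed.

Lemma maxdeg_le {T : finType} (e : rel T) n : (forall x, deg e x <= n) -> maxdeg e <= n.
Proof. by move=> h; apply/bigmax_leqP => x _; apply: h. Qed.

Lemma edge_in {T : finType} (e : rel T) x y : e x y -> [set x; y] \in edges e.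
Proof. by move=> h; apply/imset2P; exists x y; rewrite ?inE. Qed.

Section Gen.
Variables (T : finType) (e : rel T).

Lemma maxdeg_remove0 : maxdeg (remove_edges e set0) = maxdeg e.
Proof.
rewrite /maxdeg; apply: eq_bigr => x _; rewrite /deg; apply: eq_card => y.
by rewrite !inE /remove_edges inE andbT.
Qed.

Lemma set2_inj (x y1 y2 : T) : [set x; y1] = [set x; y2] -> y1 = y2.
Proof.
move=> h.
have : y1 \in [set x; y2] by rewrite -h !inE eqxx orbT.
rewrite !inE => /orP [/eqP hx|/eqP //].
subst y1.
have : y2 \in [set x; x] by rewrite h !inE eqxx orbT.
by rewrite !inE orbb => /eqP.
Qed.

Lemma deg_removeD1 F f x :
  deg (remove_edges e (F :\ f)) x <= (deg (remove_edges e F) x).+1.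
Proof.
rewrite /deg.
have hs : [set y | remove_edges e (F :\ f) x y] \subset
  [set y | remove_edges e F x y] :|: [set y | [set x; y] == f].
  apply/subsetP => y; rewrite !inE /remove_edges !inE.
  case: (e x y) => //=; rewrite negb_and negbK.
  by case/orP => [->|->]; rewrite ?orbT.
apply: (leq_trans (subset_leq_card hs)).
apply: (leq_trans (leq_card_setU _ _)).
rewrite -addn1 leq_add2l.
apply/card_le1_eqP => y1 y2; rewrite !inE => /eqP h1 /eqP h2.
by apply: (@set2_inj x); rewrite h1 h2.
Qed.

Lemma maxdeg_removeD1 F f :
  maxdeg (remove_edges e (F :\ f)) <= (maxdeg (remove_edges e F)).+1.
Proof.
apply: maxdeg_le => x; apply: (leq_trans (deg_removeD1 F f x)).
exact: (deg_le_max).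
Qed.

Lemma shrink n : forall F : {set {set T}}, #|F| <= n -> F \subset edges e ->
  maxdeg (remove_edges e F) <= (maxdeg e).-1 -> esDelta e <= #|F|.
Proof.
elim: n => [|n IH] F hF hsub hmax.
  have hF0 : F = set0 by apply/eqP; rewrite -cards_eq0 -leqn0.
  subst F; rewrite /esDelta; apply: bigmin_le.
  rewrite /es_ok sub0set /=; move: hmax; rewrite maxdeg_remove0; lia.
case: (eqVneq (maxdeg (remove_edges e F)) (maxdeg e).-1) => [heq|hne].
  by rewrite /esDelta; apply: bigmin_le; rewrite /es_ok hsub heq /= eqxx.
have hlt : maxdeg (remove_edges e F) < (maxdeg e).-1 by rewrite ltn_neqAle hne hmax.
case: (set_0Vmem F) => [hF0|[f hf]].
  by rewrite hF0 maxdeg_remove0 in hlt; move: hlt; rewrite ltnNge leq_pred.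
have hc := cardsD1 f F; rewrite hf /= in hc.
have : esDelta e <= #|F :\ f|.
  apply: IH.
  - by move: hF; rewrite hc.
  - by apply: subset_trans hsub; apply: subsetDl.
  - apply: (leq_trans (maxdeg_removeD1 F f)); exact: hlt.
by rewrite hc => h; apply: (leq_trans h); rewrite leq_addl.
Qed.

Lemma es_pos x y : e x y -> 0 < esDelta e.
Proof.
move=> hxy.
have hD : 0 < maxdeg e.
  apply: (@leq_trans (deg e x)); last exact: deg_le_max; rewrite /deg card_gt0.
  by apply/set0Pn; exists y; rewrite inE.
apply: leq_bigmin.
  move=> F /andP [_ /eqP hm].
  case: (set_0Vmem F) => [hF0|[f hf]].
    by rewrite hF0 maxdeg_remove0 in hm; move: hm; lia.
  by rewrite card_gt0; apply/set0Pn; exists f.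
by rewrite card_gt0; apply/set0Pn; exists [set x; y]; apply: edge_in.
Qed.

Let D := double_rel e.
Definition phi (b : bool) (s : {set T}) : {set T * bool} := [set (x, b) | x in s].

Lemma phi_set2 b (x y : T) : phi b [set x; y] = [set (x, b); (y, b)].
Proof. by rewrite /phi imsetU1 imset_set1. Qed.

Lemma pair_inj (b : bool) : injective (fun x : T => (x, b)).
Proof. by move=> x1 x2 [->]. Qed.

Lemma phi_inj b : injective (phi b).
Proof. exact: imset_inj (pair_inj b). Qed.

Lemma maxdeg_double : maxdeg D <= maxdeg e.
Proof.
apply: maxdeg_le => [[x b]]; rewrite /deg.
case hx: (x \in core e).
  have hs : [set v | D (x, b) v] \subset [set (y, b) | y in [set y | e x y]].
    apply/subsetP => [[y c]]; rewrite !inE /D /double_rel /= hx !andbF orbF.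
    case/andP => /eqP <- hy; apply/imsetP; exists y => //; by rewrite inE.
  apply: (leq_trans (subset_leq_card hs)); apply: (leq_trans (leq_imset_card _ _)).
  exact: deg_le_max.
have hs : [set v | D (x, b) v] \subset
   [set (y, b) | y in [set y | e x y]] :|: [set (x, ~~ b)].
  apply/subsetP => [[y c]]; rewrite !inE /D /double_rel /= hx andbT.
  case/orP => [/andP [/eqP <- hy]|/andP [/eqP <- hc]].
    by apply/orP; left; apply/imsetP; exists y => //; rewrite inE.
  by apply/orP; right; move: hc; case: b; case: c.
apply: (leq_trans (subset_leq_card hs)); apply: (leq_trans (leq_card_setU _ _)).
rewrite cards1 addn1; apply: (leq_trans _ (_ : (deg e x).+1 <= _)).
  by rewrite ltnS leq_imset_card.
rewrite ltn_neqAle deg_le_max andbT.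
by move: hx; rewrite /core inE => /negbT.
Qed.

Lemma key F : maxdeg (remove_edges D F) <= (maxdeg e).-1 -> 2 * esDelta e <= #|F|.
Proof.
move=> hmax.
pose Fb b := [set s in edges e | phi b s \in F].
have step1 : forall b, esDelta e <= #|Fb b|.
  move=> b; apply: (@shrink #|Fb b|) => //.
    by apply/subsetP => s; rewrite inE => /andP [].
  apply: maxdeg_le => x.
  case hx: (x \in core e).
    apply: (@leq_trans (deg (remove_edges D F) (x, b))); last by apply: leq_trans hmax; apply: deg_le_max.
    rewrite /deg -(card_imset _ (pair_inj b)).
    apply: subset_leq_card; apply/subsetP => v /imsetP [y]; rewrite !inE => hy ->.
    move: hy; rewrite /remove_edges /D /double_rel /= eqxx /=.
    case/andP => hy; rewrite hy /= inE negb_and (@edge_in _ e x y hy) /= phi_set2.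
    done.
  apply: leq_trans _ (_ : deg e x <= _).
    apply: subset_leq_card; apply/subsetP => y; rewrite !inE /remove_edges.
    by case/andP.
  have := deg_le_max e x; move: hx; rewrite /core inE => /negbT; lia.
have step2 : #|Fb false| + #|Fb true| <= #|F|.
  rewrite -(card_imset _ (phi_inj false)).
  rewrite -(card_imset _ (phi_inj true)) -cardsUI.
  have -> : [set phi false A | A in Fb false] :&:
            [set phi true A | A in Fb true] = set0.
    apply/setP => s; rewrite !inE; apply/negP => /andP [/imsetP [s1 h1 ->]].
    move/imsetP => [s2 _ heq].
    move: h1; rewrite inE => /andP [/imset2P [a c _ _ hs1] _].
    have : (a, false) \in phi false s1.
      by apply/imsetP; exists a => //; rewrite hs1 !inE eqxx.
    by rewrite heq => /imsetP [z _ [] ].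
  rewrite cards0 addn0; apply: subset_leq_card; apply/subsetP => s.
  by rewrite inE => /orP [] /imsetP [s1]; rewrite inE => /andP [_ h] ->.
have := step1 false; have := step1 true; lia.
Qed.

Lemma es_double : 2 * esDelta e <= esDelta D.
Proof.
apply: leq_bigmin.
  move=> F /andP [_ /eqP hm]; apply: key; rewrite hm.
  have := maxdeg_double; lia.
apply: key; apply: (@leq_trans 0) => //; apply: maxdeg_le => u.
rewrite /deg leqn0 cards_eq0; apply/eqP/setP => v; rewrite !inE /remove_edges.
by case h: (D u v) => //=; rewrite (@edge_in _ D u v h).
Qed.

End Gen.

Lemma iter_bound (T : finType) (e : rel T) k :
  let H := iter k Defs.double (existT (fun T : finType => rel T) T e) in
  #|gV H| = 2 ^ k * #|T| /\ 2 ^ k * esDelta e <= esDelta (@gE H).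
Proof.
elim: k => [|k [IH1 IH2]] /=; first by rewrite expn0 !mul1n.
split.
  by rewrite card_prod IH1 card_bool expnS mulnC mulnA.
rewrite expnS -mulnA.
have h := @es_double _ (@gE (iter k Defs.double (existT (fun T : finType => rel T) T e))).
move: IH2 h => h1 h2; refine (leq_trans _ h2); by rewrite leq_mul2l h1 orbT.
Qed.

Local Close Scope nat_scope.

Theorem lemma3p1 (T : finType) (e : rel T)
  (e_sym : symmetric e) (e_irr : irreflexive e)
  (e_edge : exists x y, e x y) :
  let RG := regularization e in
  (#|gV RG|%:R / (esDelta (@gE RG))%:R : rat)
    <= #|T|%:R / (esDelta e)%:R.
Proof.
cbv zeta; set RG := regularization e.
have [hV hb] := iter_bound T e (maxdeg e - mindeg e).
rewrite -/(regularization e) -/RG in hV hb.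
case: e_edge => x [y hxy].
have hc := @es_pos T e x y hxy.
have hb0 : (0 < esDelta (@gE RG))%N.
  by apply: leq_trans hb; rewrite muln_gt0 expn_gt0 hc.
rewrite hV ler_pdivrMr ?ltr0n // mulrAC ler_pdivlMr ?ltr0n //.
rewrite -!natrM ler_nat -mulnA mulnCA leq_mul2l hb orbT //.
Qed.
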